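(* There exist $R_0>0$ (with $R_0\ll\sqrt{3/(4\pi)}$) and $C>0$ such that for every $0<R<R_0$ there is a continuous solution $(m_R,\rho_R):[0,R]\to\mathbb{R}^2$ of the system $$\frac{dm}{dr}=4\pi r^2\rho,\qquad \frac{d\rho}{dr}=-\frac{2\rho-1}{r-2m}\Big[4\pi r^2(\rho-1)+\frac{m}{r}\Big],$$ with $\rho_R$ monotone decreasing and $m_R$ monotone increasing on $[0,R]$, and such that $$1\le\rho_R(r)\le 1+CR^2,\quad \rho_R(R)=1,\qquad m_R(0)=0,\quad 1\le \frac{3}{4\pi}\frac{m_R(r)}{r^3}\le 1+CR^2,$$ where $C$ is independent of $R$.
   Context: The system is the Tolman–Oppenheimer–Volkoff system for a static spherically symmetric barotropic fluid with equation of state $p=\rho-1$ (units with critical density $1$); $m$ is the Hawking mass and $\rho$ the energy density, as functions of the area radius $r$. Such solutions are called (small) static hard stars of radius $R$. *)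

(* Defs.v *)
From Stdlib Require Import Reals.
Open Scope R_scope.

(* Right-hand sides of the TOV system with EOS p = rho - 1. *)
Definition tov_m_rhs (r m rho : R) : R := 4 * PI * r ^ 2 * rho.
Definition tov_rho_rhs (r m rho : R) : R :=
  - ((2 * rho - 1) / (r - 2 * m)) * (4 * PI * r ^ 2 * (rho - 1) + m / r).

(* Main.v *)
Require Import Defs.
From Stdlib Require Import Reals Lra Lia Psatz.
From Coquelicot Require Import Coquelicot.
Open Scope R_scope.

Definition Hf (p rho u s : R) := (2*rho-1)*(p*(rho-1)+u)/(1-2*s^2*u).

Lemma core_eq s M rho : 0 < s -> 1 - 2*s^2*(M/s^3) <> 0 ->
  - tov_rho_rhs s M rho = s * Hf (4*PI) rho (M/s^3) s.
Proof.
  intros Hs HD. unfold tov_rho_rhs, Hf.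
  assert (Hs3 : s^3 <> 0) by (apply pow_nonzero; lra).
  assert (E : s - 2*M = s * (1 - 2*s^2*(M/s^3))) by (field; lra).
  rewrite E. field. split; [lra|]. rewrite E. apply Rmult_integral_contrapositive_currified; [lra|exact HD].
Qed.

Lemma s2_bnd s : 0 <= s <= 1/100 -> 0 <= s^2 <= 1/10000.
Proof. intros. split; [apply pow_le; lra| simpl; nra]. Qed.

Lemma D_bnd s u p : 0 < p <= 16 -> 0 <= u <= p*2/3 -> 0 <= s <= 1/100 -> 1/2 <= 1 - 2*s^2*u <= 1.
Proof. intros. assert (0 <= s^2 <= 1/10000) by (split; [apply pow_le; lra| simpl; nra]). nra. Qed.

Lemma H_bnd p rho u s : 0 < p <= 16 -> 1 <= rho <= 2 -> 0 <= u <= p*2/3 -> 0 <= s <= 1/100 ->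
  0 <= Hf p rho u s <= 162.
Proof.
  intros Hp Hr Hu Hs. pose proof (D_bnd s u p Hp Hu Hs) as HD. unfold Hf.
  set (D := 1 - 2*s^2*u) in *.
  assert (HA : 0 <= p*(rho-1)+u <= 27) by (split; nra).
  assert (HN : 0 <= (2*rho-1)*(p*(rho-1)+u) <= 81) by (split; nra).
  split.
  - apply Rmult_le_pos; [lra| apply Rlt_le, Rinv_0_lt_compat; lra].
  - apply (Rmult_le_reg_r D); [lra|]. unfold Rdiv. rewrite Rmult_assoc, Rinv_l by lra. nra.
Qed.

Lemma H_lip p r1 r2 u1 u2 s d : 0 < p <= 16 -> 1 <= r1 <= 2 -> 1 <= r2 <= 2 ->
  0 <= u1 <= p*2/3 -> 0 <= u2 <= p*2/3 -> 0 <= s <= 1/100 ->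
  Rabs (r1 - r2) <= d -> Rabs (u1 - u2) <= p/3*d ->
  Rabs (Hf p r1 u1 s - Hf p r2 u2 s) <= 800 * d.
Proof.
  intros Hp H1 H2 Hu1 Hu2 Hs Hd1 Hd2.
  pose proof (D_bnd s u1 p Hp Hu1 Hs) as HD1. pose proof (D_bnd s u2 p Hp Hu2 Hs) as HD2.
  assert (Hd : 0 <= d) by (pose proof (Rabs_pos (r1-r2)); lra).
  set (D1 := 1 - 2*s^2*u1) in *. set (D2 := 1 - 2*s^2*u2) in *.
  set (N1 := (2*r1-1)*(p*(r1-1)+u1)). set (N2 := (2*r2-1)*(p*(r2-1)+u2)).
  assert (E : Hf p r1 u1 s - Hf p r2 u2 s = ((N1 - N2)*D2 + N2*(D2-D1)) * (/ (D1*D2))).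
  { unfold Hf, N1, N2. fold D1 D2. field. lra. }
  rewrite E.
  assert (EN : N1 - N2 = 2*(r1-r2)*(p*(r1-1)+u1) + (2*r2-1)*(p*(r1-r2) + (u1-u2))) by (unfold N1,N2; ring).
  assert (ED : D2 - D1 = 2*s^2*(u1-u2)) by (unfold D1, D2; ring).
  assert (HN1 : Rabs (N1 - N2) <= 118*d).
  { rewrite EN. eapply Rle_trans; [apply Rabs_triang|].
    rewrite !Rabs_mult. rewrite (Rabs_right 2) by lra.
    assert (HA1 : 0 <= p*(r1-1)+u1 <= 27) by (split; nra).
    rewrite (Rabs_right (p*(r1-1)+u1)) by nra. rewrite (Rabs_right (2*r2-1)) by lra.
    assert (Rabs (p*(r1-r2) + (u1-u2)) <= 16*d + 16/3*d).
    { eapply Rle_trans; [apply Rabs_triang|]. rewrite Rabs_mult, (Rabs_right p) by lra. nra. }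
    nra. }
  assert (HD : Rabs (D2 - D1) <= d).
  { rewrite ED, !Rabs_mult, (Rabs_right 2) by lra. rewrite (Rabs_right (s^2)) by (apply Rle_ge, pow_le; lra).
    pose proof (s2_bnd s Hs). assert (Rabs (u1-u2) <= 16/3*d) by nra.
    pose proof (Rabs_pos (u1-u2)). nra. }
  assert (HA2 : 0 <= p*(r2-1)+u2 <= 27) by (split; nra).
  assert (HN2 : 0 <= N2 <= 81) by (unfold N2; split; nra).
  rewrite Rabs_mult. rewrite (Rabs_right (/ (D1*D2))) by (apply Rle_ge, Rlt_le, Rinv_0_lt_compat; nra).
  assert (Hinv : / (D1*D2) <= 4).
  { replace 4 with (/ (1/4)) by field. apply Rinv_le_contravar; [lra| nra]. }
  assert (Rabs ((N1 - N2) * D2 + N2 * (D2 - D1)) <= 118*d + 81*d).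
  { eapply Rle_trans; [apply Rabs_triang|]. rewrite !Rabs_mult.
    rewrite (Rabs_right D2) by lra. rewrite (Rabs_right N2) by lra. nra. }
  assert (0 <= / (D1*D2)) by (apply Rlt_le, Rinv_0_lt_compat; nra).
  nra.
Qed.

Definition cl (Rd s : R) := Rmax 0 (Rmin s Rd).

Ltac clcases := unfold cl, Rmax, Rmin; repeat (destruct (Rle_dec _ _)); try lra.

Lemma cl_in Rd s : 0 <= Rd -> 0 <= cl Rd s <= Rd.
Proof. intros; clcases. Qed.
Lemma cl_id Rd s : 0 <= s <= Rd -> cl Rd s = s.
Proof. intros; clcases. Qed.
Lemma cl_lip Rd x y : 0 <= Rd -> Rabs (cl Rd y - cl Rd x) <= Rabs (y - x).
Proof. intros; clcases; unfold Rabs; repeat destruct (Rcase_abs _); lra. Qed.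
Lemma cl_small Rd x y : 0 <= Rd -> x <= 0 -> cl Rd y <= Rabs (y - x).
Proof. intros; clcases; unfold Rabs; repeat destruct (Rcase_abs _); lra. Qed.
Lemma cl_zero Rd x : 0 <= Rd -> x <= 0 -> cl Rd x = 0.
Proof. intros; clcases. Qed.
Lemma cl_pos Rd x : 0 < Rd -> 0 < x -> 0 < cl Rd x.
Proof. intros; clcases. Qed.

Lemma cont_eps f x : (forall eps, 0 < eps -> exists delta, 0 < delta /\
   forall y, Rabs (y - x) < delta -> Rabs (f y - f x) < eps) -> continuity_pt f x.
Proof.
  intros H. unfold continuity_pt, continue_in, limit1_in, limit_in.
  intros eps Heps. destruct (H eps Heps) as [d [Hd Hy]]. exists d; split; auto.
  intros y [_ Hy']. simpl in *. unfold R_dist in *. apply Hy; auto.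
Qed.

Lemma cont_eps_inv f x : continuity_pt f x -> forall eps, 0 < eps -> exists delta, 0 < delta /\
   forall y, Rabs (y - x) < delta -> Rabs (f y - f x) < eps.
Proof.
  intros H eps Heps. unfold continuity_pt, continue_in, limit1_in, limit_in in H.
  destruct (H eps Heps) as [d [Hd Hy]]. exists d; split; auto.
  intros y Hyx. destruct (Req_dec y x) as [->|Hne].
  - unfold Rminus; rewrite Rplus_opp_r, Rabs_R0; auto.
  - apply (Hy y). split; [split; [exact I| auto] | exact Hyx].
Qed.

Lemma cont_lip f x L : 0 < L -> (forall y, Rabs (f y - f x) <= L * Rabs (y - x)) -> continuity_pt f x.
Proof.
  intros HL H. apply cont_eps. intros eps He. exists (eps / L). split.
  - apply Rdiv_lt_0_compat; lra.
  - intros y Hy. eapply Rle_lt_trans; [apply H|].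
    apply (Rmult_lt_compat_l L) in Hy; [|lra]. field_simplify in Hy; lra.
Qed.

Lemma cl_cont Rd x : 0 <= Rd -> continuity_pt (cl Rd) x.
Proof. intros. apply (cont_lip _ _ 1); [lra|]. intros; rewrite Rmult_1_l; apply cl_lip; auto. Qed.

Lemma cpt_plus f g x : continuity_pt f x -> continuity_pt g x -> continuity_pt (fun y => f y + g y) x.
Proof. apply continuity_pt_plus. Qed.
Lemma cpt_minus f g x : continuity_pt f x -> continuity_pt g x -> continuity_pt (fun y => f y - g y) x.
Proof. apply continuity_pt_minus. Qed.
Lemma cpt_mult f g x : continuity_pt f x -> continuity_pt g x -> continuity_pt (fun y => f y * g y) x.
Proof. apply continuity_pt_mult. Qed.
Lemma cpt_opp f x : continuity_pt f x -> continuity_pt (fun y => - f y) x.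
Proof. apply continuity_pt_opp. Qed.
Lemma cpt_inv f x : continuity_pt f x -> f x <> 0 -> continuity_pt (fun y => / f y) x.
Proof. apply continuity_pt_inv. Qed.
Lemma cpt_const c x : continuity_pt (fun _ => c) x.
Proof. apply continuity_pt_const. intros a b; reflexivity. Qed.
Lemma cpt_id x : continuity_pt (fun y => y) x.
Proof. apply derivable_continuous_pt, derivable_pt_id. Qed.
Lemma cpt_comp f g x : continuity_pt f x -> continuity_pt g (f x) -> continuity_pt (fun y => g (f y)) x.
Proof. apply continuity_pt_comp. Qed.
Lemma cpt_pow f n x : continuity_pt f x -> continuity_pt (fun y => f y ^ n) x.
Proof. intros. apply (cpt_comp f (fun y => y ^ n)); auto. apply derivable_continuous_pt, derivable_pt_pow. Qed.

Lemma exR f a b : (forall z, continuity_pt f z) -> ex_RInt f a b.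
Proof. intros H. apply (ex_RInt_continuous (V:=R_CompleteNormedModule)). intros; apply continuity_pt_filterlim; auto. Qed.

Lemma dRInt f a x : (forall z, continuity_pt f z) -> derivable_pt_lim (fun y => RInt f a y) x (f x).
Proof.
  intros H. apply is_derive_Reals. apply (is_derive_RInt f (RInt f a) a).
  - apply filter_forall. intros; apply (RInt_correct (V:=R_CompleteNormedModule)), exR; auto.
  - apply continuity_pt_filterlim; auto.
Qed.

Lemma RInt_le' f g a b : a <= b -> (forall z, continuity_pt f z) -> (forall z, continuity_pt g z) ->
  (forall x, a <= x <= b -> f x <= g x) -> RInt f a b <= RInt g a b.
Proof. intros. apply RInt_le; auto using exR. intros; apply H2; lra. Qed.

Lemma RInt_const' c a b : RInt (fun _ => c) a b = (b - a) * c.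
Proof. rewrite RInt_const. reflexivity. Qed.

Lemma RInt_minus' f g a b : (forall z, continuity_pt f z) -> (forall z, continuity_pt g z) ->
  RInt (fun x => f x - g x) a b = RInt f a b - RInt g a b.
Proof. intros. apply (RInt_minus f g); auto using exR. Qed.

Lemma minusR (a b : R) : minus a b = a - b.
Proof. reflexivity. Qed.

Lemma RInt_t2 c s : RInt (fun t => c * t^2) 0 s = c * s^3 / 3.
Proof.
  apply is_RInt_unique.
  assert (H := is_RInt_derive (V:=R_CompleteNormedModule) (fun t => c*t^3/3) (fun t => c*t^2) 0 s).
  rewrite minusR in H. replace (c*s^3/3 - c*0^3/3) with (c*s^3/3) in H by (simpl; field).
  apply H.
  - intros; auto_derive; auto. field.
  - intros; apply (ex_derive_continuous (V:=R_NormedModule) (fun t => c*t^2)); auto_derive; auto.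
Qed.

Lemma RInt_abs_le f a b : a <= b -> (forall z, continuity_pt f z) ->
  Rabs (RInt f a b) <= RInt (fun t => Rabs (f t)) a b.
Proof. intros. apply abs_RInt_le; auto using exR. Qed.

Lemma cont_abs f : (forall z, continuity_pt f z) -> forall z, continuity_pt (fun t => Rabs (f t)) z.
Proof. intros. apply (cpt_comp f Rabs); auto. apply Rcontinuity_abs. Qed.

Definition Mf (Rd : R) (rho : R -> R) (r : R) := RInt (fun t => 4*PI*t^2 * rho (cl Rd t)) 0 r.
Definition Good (Rd : R) (rho : R -> R) :=
  (forall x, continuity_pt (fun t => rho (cl Rd t)) x) /\ (forall x, 1 <= rho (cl Rd x) <= 2).

Lemma PI_bnd : 0 < 4*PI <= 16.
Proof. pose proof PI_RGT_0; pose proof PI_4; lra. Qed.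

Lemma Mf_int_cont Rd rho : Good Rd rho -> forall z, continuity_pt (fun t => 4*PI*t^2 * rho (cl Rd t)) z.
Proof.
  intros [Hc _] z. apply cpt_mult; [apply cpt_mult; [apply cpt_const| apply cpt_pow, cpt_id]| apply Hc].
Qed.

Lemma Mf_deriv Rd rho x : Good Rd rho -> derivable_pt_lim (Mf Rd rho) x (4*PI*x^2 * rho (cl Rd x)).
Proof. intros H. apply (dRInt (fun t => 4*PI*t^2 * rho (cl Rd t))). apply Mf_int_cont; auto. Qed.

Lemma Mf_cont Rd rho x : Good Rd rho -> continuity_pt (Mf Rd rho) x.
Proof. intros H. apply (derivable_continuous_pt _ _ (exist _ _ (Mf_deriv Rd rho x H))). Qed.

Lemma Mf_0 Rd rho : Mf Rd rho 0 = 0.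
Proof. unfold Mf. rewrite RInt_point. reflexivity. Qed.

Lemma Mf_bnd Rd rho s a b : Good Rd rho -> 0 <= s ->
  (forall t, 0 <= t <= s -> a <= rho (cl Rd t) <= b) ->
  4*PI*a*s^3/3 <= Mf Rd rho s <= 4*PI*b*s^3/3.
Proof.
  intros HG Hs Hab. pose proof PI_bnd. split.
  - rewrite <- RInt_t2. unfold Mf. apply RInt_le'; auto.
    + intros; apply cpt_mult; [apply cpt_const| apply cpt_pow, cpt_id].
    + apply Mf_int_cont; auto.
    + intros x Hx. specialize (Hab x Hx). assert (0 <= x^2) by (apply pow_le; lra).
      assert (0 <= 4*PI*x^2) by nra.
      assert (0 <= (rho (cl Rd x) - a) * (4*PI*x^2)) by (apply Rmult_le_pos; lra).
      lra.
  - rewrite <- RInt_t2. unfold Mf. apply RInt_le'; auto.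
    + apply Mf_int_cont; auto.
    + intros; apply cpt_mult; [apply cpt_const| apply cpt_pow, cpt_id].
    + intros x Hx. specialize (Hab x Hx). assert (0 <= x^2) by (apply pow_le; lra).
      assert (0 <= 4*PI*x^2) by nra.
      assert (0 <= (b - rho (cl Rd x)) * (4*PI*x^2)) by (apply Rmult_le_pos; lra).
      lra.
Qed.

Lemma Mf_diff Rd r1 r2 s d : Good Rd r1 -> Good Rd r2 -> 0 <= s ->
  (forall x, Rabs (r1 (cl Rd x) - r2 (cl Rd x)) <= d) ->
  Rabs (Mf Rd r1 s - Mf Rd r2 s) <= 4*PI*d*s^3/3.
Proof.
  intros H1 H2 Hs Hd. pose proof PI_bnd. unfold Mf.
  rewrite <- RInt_minus' by (apply Mf_int_cont; auto).
  eapply Rle_trans; [apply RInt_abs_le; auto|].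
  { intros; apply cpt_minus; apply Mf_int_cont; auto. }
  rewrite <- RInt_t2. apply RInt_le'; auto.
  - apply cont_abs. intros; apply cpt_minus; apply Mf_int_cont; auto.
  - intros; apply cpt_mult; [apply cpt_const| apply cpt_pow, cpt_id].
  - intros x Hx. assert (0 <= x^2) by (apply pow_le; lra).
    replace (4 * PI * x ^ 2 * r1 (cl Rd x) - 4 * PI * x ^ 2 * r2 (cl Rd x)) with
      ((4*PI*x^2) * (r1 (cl Rd x) - r2 (cl Rd x))) by ring.
    rewrite Rabs_mult, (Rabs_right (4*PI*x^2)) by nra.
    specialize (Hd x). assert (0 <= 4*PI*x^2) by nra.
    assert (0 <= (d - Rabs (r1 (cl Rd x) - r2 (cl Rd x))) * (4*PI*x^2)) by (apply Rmult_le_pos; lra).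
    lra.
Qed.

Definition Gh Rd rho s := - tov_rho_rhs (cl Rd s) (Mf Rd rho (cl Rd s)) (rho (cl Rd s)).

Lemma Gh_zero Rd rho s : cl Rd s = 0 -> Gh Rd rho s = 0.
Proof.
  intros H. unfold Gh, tov_rho_rhs. rewrite H, Mf_0.
  replace (0 - 2*0) with 0 by ring. unfold Rdiv. rewrite Rinv_0. ring.
Qed.

Lemma u_bnd Rd rho c : Good Rd rho -> 0 < c ->
  0 <= Mf Rd rho c / c^3 <= 4*PI*2/3.
Proof.
  intros HG Hc. destruct HG as [Hc1 Hb] eqn:E.
  assert (Hm := Mf_bnd Rd rho c 1 2 HG (Rlt_le _ _ Hc) (fun t _ => Hb t)).
  pose proof PI_bnd. assert (H3 : 0 < c^3) by (apply pow_lt; lra).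
  assert (Hi : 0 < / c^3) by (apply Rinv_0_lt_compat; lra).
  split.
  - unfold Rdiv. apply Rmult_le_pos; [|lra]. assert (0 <= 4*PI*1*c^3/3) by (unfold Rdiv; nra). lra.
  - apply (Rmult_le_reg_r (c^3)); auto. unfold Rdiv. rewrite Rmult_assoc, Rinv_l by lra.
    replace (4*PI*2/3*c^3) with (4*PI*2*c^3/3) by field. lra.
Qed.

Lemma Gh_pos Rd rho s : 0 < Rd <= 1/100 -> Good Rd rho -> 0 < cl Rd s ->
  Gh Rd rho s = cl Rd s * Hf (4*PI) (rho (cl Rd s)) (Mf Rd rho (cl Rd s) / (cl Rd s)^3) (cl Rd s).
Proof.
  intros HR HG Hc. unfold Gh. apply core_eq; auto.
  pose proof (cl_in Rd s ltac:(lra)). pose proof (u_bnd Rd rho _ HG Hc).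
  pose proof (D_bnd (cl Rd s) (Mf Rd rho (cl Rd s) / cl Rd s ^ 3) (4*PI) PI_bnd H0 ltac:(lra)). lra.
Qed.

Lemma Gh_bnd Rd rho s : 0 < Rd <= 1/100 -> Good Rd rho -> 0 <= Gh Rd rho s <= 162 * cl Rd s.
Proof.
  intros HR HG. pose proof (cl_in Rd s ltac:(lra)).
  destruct (Req_dec (cl Rd s) 0) as [E|E].
  - rewrite Gh_zero by auto. rewrite E. lra.
  - assert (Hc : 0 < cl Rd s) by lra. rewrite Gh_pos by auto.
    pose proof (u_bnd Rd rho _ HG Hc). destruct HG as [_ Hb].
    pose proof (H_bnd (4*PI) (rho (cl Rd s)) (Mf Rd rho (cl Rd s) / cl Rd s ^ 3) (cl Rd s) PI_bnd (Hb s) H0 ltac:(lra)).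
    nra.
Qed.

Lemma Gh_lip Rd r1 r2 s d : 0 < Rd <= 1/100 -> Good Rd r1 -> Good Rd r2 ->
  (forall x, Rabs (r1 (cl Rd x) - r2 (cl Rd x)) <= d) ->
  Rabs (Gh Rd r1 s - Gh Rd r2 s) <= 800 * d * cl Rd s.
Proof.
  intros HR H1 H2 Hd. pose proof (cl_in Rd s ltac:(lra)).
  assert (Hd0 : 0 <= d) by (pose proof (Hd 0); pose proof (Rabs_pos (r1 (cl Rd 0) - r2 (cl Rd 0))); lra).
  destruct (Req_dec (cl Rd s) 0) as [E|E].
  - rewrite !Gh_zero by auto. rewrite E. unfold Rminus; rewrite Rplus_opp_r, Rabs_R0. lra.
  - assert (Hc : 0 < cl Rd s) by lra. rewrite !Gh_pos by auto.
    set (c := cl Rd s) in *.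
    pose proof (u_bnd Rd r1 _ H1 Hc) as Hu1. pose proof (u_bnd Rd r2 _ H2 Hc) as Hu2.
    assert (Hu : Rabs (Mf Rd r1 c / c^3 - Mf Rd r2 c / c^3) <= 4*PI/3*d).
    { assert (Hc3 : 0 < c^3) by (apply pow_lt; lra).
      replace (Mf Rd r1 c / c^3 - Mf Rd r2 c / c^3) with ((Mf Rd r1 c - Mf Rd r2 c) * / c^3) by (field; lra).
      rewrite Rabs_mult, (Rabs_right (/ c^3)) by (apply Rle_ge, Rlt_le, Rinv_0_lt_compat; lra).
      pose proof (Mf_diff Rd r1 r2 c d H1 H2 ltac:(lra) Hd).
      apply (Rmult_le_reg_r (c^3)); auto. rewrite Rmult_assoc, Rinv_l by lra.
      replace (4*PI/3*d*c^3) with (4*PI*d*c^3/3) by field. lra. }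
    destruct H1 as [_ Hb1]. destruct H2 as [_ Hb2].
    pose proof (H_lip (4*PI) (r1 c) (r2 c) _ _ c d PI_bnd (Hb1 s) (Hb2 s) Hu1 Hu2 ltac:(lra) (Hd s) Hu).
    rewrite <- Rmult_minus_distr_l, Rabs_mult, (Rabs_right c) by lra. nra.
Qed.

Lemma tov_cont f g h x : continuity_pt f x -> continuity_pt g x -> continuity_pt h x ->
  f x <> 0 -> f x - 2 * g x <> 0 ->
  continuity_pt (fun y => - tov_rho_rhs (f y) (g y) (h y)) x.
Proof.
  intros Hf Hg Hh H1 H2. unfold tov_rho_rhs, Rdiv.
  apply cpt_opp, cpt_mult; [apply cpt_opp, cpt_mult|].
  - apply cpt_minus; [apply cpt_mult; [apply cpt_const| auto]| apply cpt_const].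
  - apply cpt_inv; auto. apply cpt_minus; auto. apply cpt_mult; [apply cpt_const| auto].
  - apply cpt_plus.
    + apply cpt_mult; [apply cpt_mult; [apply cpt_const| apply cpt_pow; auto]|].
      apply cpt_minus; [auto| apply cpt_const].
    + apply cpt_mult; auto. apply cpt_inv; auto.
Qed.

Lemma Gh_cont Rd rho x : 0 < Rd <= 1/100 -> Good Rd rho -> continuity_pt (Gh Rd rho) x.
Proof.
  intros HR HG. destruct (Rle_lt_dec x 0) as [Hx|Hx].
  - apply (cont_lip _ _ 162); [lra|]. intros y.
    rewrite (Gh_zero Rd rho x) by (apply cl_zero; lra).
    pose proof (Gh_bnd Rd rho y HR HG). pose proof (cl_small Rd x y ltac:(lra) Hx).
    rewrite Rminus_0_r, Rabs_right by lra. lra.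
  - pose proof (cl_pos Rd x ltac:(lra) Hx) as Hc.
    unfold Gh. apply tov_cont.
    + apply cl_cont; lra.
    + apply (cpt_comp (cl Rd) (Mf Rd rho)); [apply cl_cont; lra| apply Mf_cont; auto].
    + destruct HG as [Hc1 _]. apply Hc1.
    + lra.
    + pose proof (u_bnd Rd rho _ HG Hc). pose proof (cl_in Rd x ltac:(lra)).
      pose proof (D_bnd (cl Rd x) (Mf Rd rho (cl Rd x) / cl Rd x ^ 3) (4*PI) PI_bnd H ltac:(lra)).
      assert (H3 : 0 < cl Rd x ^ 3) by (apply pow_lt; lra).
      replace (cl Rd x - 2 * Mf Rd rho (cl Rd x)) with
        (cl Rd x * (1 - 2 * cl Rd x ^ 2 * (Mf Rd rho (cl Rd x) / cl Rd x ^ 3))) by (field; lra).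
      apply Rmult_integral_contrapositive_currified; lra.
Qed.

Definition T Rd rho r := 1 + RInt (Gh Rd rho) r Rd.

Lemma T_alt Rd rho r : 0 < Rd <= 1/100 -> Good Rd rho -> T Rd rho r = 1 - RInt (Gh Rd rho) Rd r.
Proof.
  intros HR HG. unfold T. rewrite <- (opp_RInt_swap (V:=R_CompleteNormedModule)).
  - unfold opp; simpl. ring.
  - apply exR. intros; apply Gh_cont; auto.
Qed.

Lemma T_deriv Rd rho x : 0 < Rd <= 1/100 -> Good Rd rho -> derivable_pt_lim (T Rd rho) x (- Gh Rd rho x).
Proof.
  intros HR HG. apply is_derive_Reals.
  apply (is_derive_ext (fun r => 1 - RInt (Gh Rd rho) Rd r)).
  { intros; symmetry; apply T_alt; auto. }
  apply is_derive_Reals.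
  replace (- Gh Rd rho x) with (0 - Gh Rd rho x) by ring.
  apply (derivable_pt_lim_minus (fun _ => 1) (fun r => RInt (Gh Rd rho) Rd r)).
  - apply derivable_pt_lim_const.
  - apply dRInt. intros; apply Gh_cont; auto.
Qed.

Lemma T_cont Rd rho x : 0 < Rd <= 1/100 -> Good Rd rho -> continuity_pt (T Rd rho) x.
Proof. intros HR HG. apply (derivable_continuous_pt _ _ (exist _ _ (T_deriv Rd rho x HR HG))). Qed.

Lemma T_bnd Rd rho r : 0 < Rd <= 1/100 -> Good Rd rho -> 0 <= r <= Rd ->
  1 <= T Rd rho r <= 1 + 162 * Rd^2.
Proof.
  intros HR HG Hr. unfold T.
  assert (Hc : forall z, continuity_pt (Gh Rd rho) z) by (intros; apply Gh_cont; auto).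
  split.
  - assert (0 <= RInt (Gh Rd rho) r Rd); [|lra].
    apply Rle_trans with (RInt (fun _ => 0) r Rd). { rewrite RInt_const'. lra. }
    apply RInt_le'; try lra; auto. intros; apply cpt_const.
    intros; apply Gh_bnd; auto.
  - assert (RInt (Gh Rd rho) r Rd <= RInt (fun _ => 162*Rd) r Rd).
    { apply RInt_le'; try lra; auto. intros; apply cpt_const.
      intros x _. pose proof (Gh_bnd Rd rho x HR HG). pose proof (cl_in Rd x ltac:(lra)). nra. }
    rewrite RInt_const' in H. simpl. nra.
Qed.

Lemma T_good Rd rho : 0 < Rd <= 1/100 -> Good Rd rho -> Good Rd (T Rd rho).
Proof.
  intros HR HG. split.
  - intros x. apply (cpt_comp (cl Rd) (T Rd rho)); [apply cl_cont; lra| apply T_cont; auto].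
  - intros x. pose proof (cl_in Rd x ltac:(lra)). pose proof (T_bnd Rd rho _ HR HG H).
    assert (Rd^2 <= 1/10000) by (apply s2_bnd; lra). nra.
Qed.

Lemma T_contr Rd r1 r2 d : 0 < Rd <= 1/100 -> Good Rd r1 -> Good Rd r2 ->
  (forall x, Rabs (r1 (cl Rd x) - r2 (cl Rd x)) <= d) ->
  forall x, Rabs (T Rd r1 (cl Rd x) - T Rd r2 (cl Rd x)) <= d / 2.
Proof.
  intros HR H1 H2 Hd x. pose proof (cl_in Rd x ltac:(lra)). set (r := cl Rd x) in *.
  assert (Hd0 : 0 <= d) by (pose proof (Hd 0); pose proof (Rabs_pos (r1 (cl Rd 0) - r2 (cl Rd 0))); lra).
  assert (Hc1 : forall z, continuity_pt (Gh Rd r1) z) by (intros; apply Gh_cont; auto).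
  assert (Hc2 : forall z, continuity_pt (Gh Rd r2) z) by (intros; apply Gh_cont; auto).
  unfold T. replace (1 + RInt (Gh Rd r1) r Rd - (1 + RInt (Gh Rd r2) r Rd))
    with (RInt (Gh Rd r1) r Rd - RInt (Gh Rd r2) r Rd) by ring.
  rewrite <- RInt_minus' by auto.
  eapply Rle_trans; [apply RInt_abs_le; [lra|]|].
  { intros; apply cpt_minus; auto. }
  eapply Rle_trans. apply (RInt_le' _ (fun _ => 800*d*Rd)); [lra| | |].
  - apply cont_abs. intros; apply cpt_minus; auto.
  - intros; apply cpt_const.
  - intros y _. pose proof (Gh_lip Rd r1 r2 y d HR H1 H2 Hd). pose proof (cl_in Rd y ltac:(lra)).
    assert (0 <= 800*d*(Rd - cl Rd y)) by (apply Rmult_le_pos; lra). lra.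
  - rewrite RInt_const'. assert (Rd^2 <= 1/10000) by (apply s2_bnd; lra). simpl in H0.
    assert (0 <= 800*d*Rd*r) by (apply Rmult_le_pos; [apply Rmult_le_pos|]; lra).
    assert (800*d*(Rd*Rd) <= 800*d*(1/10000)) by (apply Rmult_le_compat_l; lra). lra.
Qed.

Fixpoint seqr (Rd : R) (n : nat) : R -> R :=
  match n with O => fun _ => 1 | S k => T Rd (seqr Rd k) end.

Lemma seq_good Rd n : 0 < Rd <= 1/100 -> Good Rd (seqr Rd n).
Proof.
  intros HR. induction n as [|n IH]; simpl.
  - split; [intros; apply cpt_const| intros; lra].
  - apply T_good; auto.
Qed.

Lemma half_pos n : 0 < (1/2)^n.
Proof. apply pow_lt; lra. Qed.

Lemma seq_step Rd n x : 0 < Rd <= 1/100 ->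
  Rabs (seqr Rd (S n) (cl Rd x) - seqr Rd n (cl Rd x)) <= (1/2)^n.
Proof.
  intros HR. revert x. induction n as [|n IH]; intros x.
  - simpl. destruct (T_good Rd (fun _ => 1) HR (seq_good Rd 0 HR)) as [_ Hb].
    specialize (Hb x). unfold Rabs; destruct Rcase_abs; lra.
  - change (seqr Rd (S (S n))) with (T Rd (seqr Rd (S n))).
    change (seqr Rd (S n)) with (T Rd (seqr Rd n)) at 2.
    eapply Rle_trans; [apply T_contr; auto using seq_good|].
    simpl. lra.
Qed.

Lemma seq_cauchy Rd n k x : 0 < Rd <= 1/100 ->
  Rabs (seqr Rd (n + k) (cl Rd x) - seqr Rd n (cl Rd x)) <= 2*(1/2)^n - 2*(1/2)^(n+k).
Proof.
  intros HR. induction k as [|k IH].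
  - rewrite Nat.add_0_r. unfold Rminus; rewrite Rplus_opp_r, Rabs_R0. lra.
  - replace (n + S k)%nat with (S (n + k)) by lia.
    pose proof (seq_step Rd (n+k) x HR).
    replace (seqr Rd (S (n + k)) (cl Rd x) - seqr Rd n (cl Rd x)) with
      ((seqr Rd (S (n + k)) (cl Rd x) - seqr Rd (n+k) (cl Rd x)) + (seqr Rd (n + k) (cl Rd x) - seqr Rd n (cl Rd x))) by ring.
    eapply Rle_trans; [apply Rabs_triang|].
    change ((1/2)^(S (n+k))) with (1/2 * (1/2)^(n+k)). lra.
Qed.

Lemma seq_cauchy' Rd n m x : 0 < Rd <= 1/100 -> (n <= m)%nat ->
  Rabs (seqr Rd m (cl Rd x) - seqr Rd n (cl Rd x)) <= 2*(1/2)^n.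
Proof.
  intros HR Hnm. replace m with (n + (m - n))%nat by lia.
  pose proof (seq_cauchy Rd n (m-n) x HR). pose proof (half_pos (n + (m-n))). lra.
Qed.

Lemma small_pow eps : 0 < eps -> exists N, forall n, (n >= N)%nat -> (1/2)^n < eps.
Proof.
  intros He. destruct (pow_lt_1_zero (1/2) ltac:(rewrite Rabs_right; lra) eps He) as [N HN].
  exists N. intros n Hn. specialize (HN n Hn). rewrite Rabs_right in HN; auto.
  apply Rle_ge, Rlt_le, half_pos.
Qed.

Lemma vanish a b : (forall n, a <= b + 2*(1/2)^n) -> a <= b.
Proof.
  intros H. destruct (Rle_dec a b) as [|Hn]; auto. exfalso.
  destruct (small_pow ((a - b)/2) ltac:(lra)) as [N HN].
  specialize (H N). specialize (HN N (Nat.le_refl _)). lra.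
Qed.

Definition rinf Rd (r : R) : R := real (Lim_seq (fun n => seqr Rd n r)).

Lemma rinf_lim Rd x : 0 < Rd <= 1/100 -> Un_cv (fun n => seqr Rd n (cl Rd x)) (rinf Rd (cl Rd x)).
Proof.
  intros HR.
  assert (Hc : Cauchy_crit (fun n => seqr Rd n (cl Rd x))).
  { intros eps He. destruct (small_pow (eps/2) ltac:(lra)) as [N HN]. exists N.
    intros n m Hn Hm. unfold R_dist. destruct (Nat.le_ge_cases n m) as [H|H].
    - pose proof (seq_cauchy' Rd n m x HR H). specialize (HN n Hn).
      rewrite Rabs_minus_sym. lra.
    - pose proof (seq_cauchy' Rd m n x HR H). specialize (HN m Hm). lra. }
  destruct (Rcomplete.R_complete _ Hc) as [l Hl].
  unfold rinf. replace (Lim_seq (fun n => seqr Rd n (cl Rd x))) with (Finite l).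
  - exact Hl.
  - symmetry. apply is_lim_seq_unique. apply is_lim_seq_Reals. exact Hl.
Qed.

Lemma lim_bound u l n a e : Un_cv u l -> (forall k, Rabs (u (n + k)%nat - a) <= e) -> Rabs (l - a) <= e.
Proof.
  intros Hu Hb. destruct (Rle_dec (Rabs (l - a)) e) as [|Hn]; auto. exfalso.
  destruct (Hu (Rabs (l - a) - e) ltac:(lra)) as [N HN].
  specialize (HN (n + N)%nat ltac:(lia)). specialize (Hb N). unfold R_dist in HN.
  pose proof (Rabs_triang (l - u (n+N)%nat) (u (n+N)%nat - a)).
  replace (l - u (n+N)%nat + (u (n+N)%nat - a)) with (l - a) in H by ring.
  rewrite Rabs_minus_sym in HN. lra.
Qed.

Lemma rinf_close Rd n x : 0 < Rd <= 1/100 ->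
  Rabs (seqr Rd n (cl Rd x) - rinf Rd (cl Rd x)) <= 2*(1/2)^n.
Proof.
  intros HR. rewrite Rabs_minus_sym.
  apply (lim_bound _ _ n _ _ (rinf_lim Rd x HR)).
  intros k. apply seq_cauchy'; auto. lia.
Qed.

Lemma rinf_good Rd : 0 < Rd <= 1/100 -> Good Rd (rinf Rd).
Proof.
  intros HR. split.
  - intros x. apply cont_eps. intros eps He.
    destruct (small_pow (eps/6) ltac:(lra)) as [N HN]. specialize (HN N (Nat.le_refl _)).
    destruct (seq_good Rd N HR) as [Hc _].
    destruct (cont_eps_inv _ _ (Hc x) (eps/3) ltac:(lra)) as [d [Hd Hy]].
    exists d; split; auto. intros y Hyx. specialize (Hy y Hyx).
    pose proof (rinf_close Rd N x HR). pose proof (rinf_close Rd N y HR).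
    replace (rinf Rd (cl Rd y) - rinf Rd (cl Rd x)) with
      ((rinf Rd (cl Rd y) - seqr Rd N (cl Rd y)) + (seqr Rd N (cl Rd y) - seqr Rd N (cl Rd x))
        + (seqr Rd N (cl Rd x) - rinf Rd (cl Rd x))) by ring.
    eapply Rle_lt_trans; [apply Rabs_triang|].
    pose proof (Rabs_triang (rinf Rd (cl Rd y) - seqr Rd N (cl Rd y)) (seqr Rd N (cl Rd y) - seqr Rd N (cl Rd x))).
    rewrite Rabs_minus_sym in H0. lra.
  - intros x. split.
    + apply vanish. intros n. pose proof (rinf_close Rd n x HR).
      destruct (seq_good Rd n HR) as [_ Hb]. specialize (Hb x).
      unfold Rabs in H; destruct Rcase_abs in H; lra.
    + apply vanish. intros n. pose proof (rinf_close Rd n x HR).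
      destruct (seq_good Rd n HR) as [_ Hb]. specialize (Hb x).
      unfold Rabs in H; destruct Rcase_abs in H; lra.
Qed.

Lemma rinf_fix Rd x : 0 < Rd <= 1/100 -> T Rd (rinf Rd) (cl Rd x) = rinf Rd (cl Rd x).
Proof.
  intros HR.
  assert (H : forall n, Rabs (T Rd (rinf Rd) (cl Rd x) - rinf Rd (cl Rd x)) <= 0 + 2*(1/2)^n).
  { intros n.
    pose proof (T_contr Rd (rinf Rd) (seqr Rd n) (2*(1/2)^n) HR (rinf_good Rd HR) (seq_good Rd n HR)
       (fun y => ltac:(rewrite Rabs_minus_sym; apply rinf_close; auto)) x) as H1.
    pose proof (rinf_close Rd (S n) x HR) as H2. simpl seqr in H2.
    replace (T Rd (rinf Rd) (cl Rd x) - rinf Rd (cl Rd x)) with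
      ((T Rd (rinf Rd) (cl Rd x) - T Rd (seqr Rd n) (cl Rd x)) + (T Rd (seqr Rd n) (cl Rd x) - rinf Rd (cl Rd x))) by ring.
    eapply Rle_trans; [apply Rabs_triang|]. simpl in H2. lra. }
  pose proof (vanish _ _ H). pose proof (Rabs_pos (T Rd (rinf Rd) (cl Rd x) - rinf Rd (cl Rd x))).
  assert (Rabs (T Rd (rinf Rd) (cl Rd x) - rinf Rd (cl Rd x)) = 0) by lra.
  apply Rabs_eq_0 in H2. lra.
Qed.

Lemma Chasles' f a b c : (forall z, continuity_pt f z) -> RInt f a b + RInt f b c = RInt f a c.
Proof. intros H. apply (RInt_Chasles (V:=R_CompleteNormedModule)); apply exR; auto. Qed.

Lemma RInt_nonneg f a b : a <= b -> (forall z, continuity_pt f z) -> (forall x, a <= x <= b -> 0 <= f x) ->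
  0 <= RInt f a b.
Proof.
  intros Hab Hc Hp. apply Rle_trans with (RInt (fun _ => 0) a b). { rewrite RInt_const'. lra. }
  apply RInt_le'; auto. intros; apply cpt_const.
Qed.

Lemma ratio p r M a b : 0 < p -> 0 < r -> p*a*r^3/3 <= M <= p*b*r^3/3 -> a <= 3/p*(M/r^3) <= b.
Proof.
  intros Hp Hr HM. assert (H3 : 0 < r^3) by (apply pow_lt; lra).
  set (q := 3/p*(M/r^3)). assert (E : M = q * (p*r^3/3)) by (unfold q; field; lra).
  rewrite E in HM. assert (Hk : 0 < p*r^3/3) by (unfold Rdiv; apply Rmult_lt_0_compat; [apply Rmult_lt_0_compat|]; lra).
  split.
  - apply (Rmult_le_reg_r (p*r^3/3)); auto. replace (a*(p*r^3/3)) with (p*a*r^3/3) by field. lra.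
  - apply (Rmult_le_reg_r (p*r^3/3)); auto. replace (b*(p*r^3/3)) with (p*b*r^3/3) by field. lra.
Qed.

Lemma R0_lt : 1/100 < sqrt (3 / (4 * PI)).
Proof.
  pose proof PI_bnd.
  assert (Hs : 1/10000 < 3/(4*PI)).
  { apply (Rmult_lt_reg_r (4*PI)); [lra|]. replace (3/(4*PI)*(4*PI)) with 3 by (field; lra). lra. }
  rewrite <- (sqrt_pow2 (1/100)) by lra. apply sqrt_lt_1_alt. simpl. lra.
Qed.

Theorem proposition2p1 :
  exists R0 C : R, 0 < R0 /\ R0 < sqrt (3 / (4 * PI)) /\ 0 < C /\
  forall Rad : R, 0 < Rad < R0 ->
  exists m rho : R -> R,
    (* continuity on [0, Rad] *)
    (forall r, 0 <= r <= Rad -> continuity_pt m r /\ continuity_pt rho r) /\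
    (* the TOV system on (0, Rad] *)
    (forall r, 0 < r <= Rad ->
        derivable_pt_lim m r (tov_m_rhs r (m r) (rho r)) /\
        derivable_pt_lim rho r (tov_rho_rhs r (m r) (rho r))) /\
    (* monotonicity on [0, Rad] *)
    (forall x y, 0 <= x -> x <= y -> y <= Rad -> rho y <= rho x /\ m x <= m y) /\
    (* bounds *)
    (forall r, 0 <= r <= Rad -> 1 <= rho r <= 1 + C * Rad ^ 2) /\
    rho Rad = 1 /\ m 0 = 0 /\
    (forall r, 0 < r <= Rad ->
        1 <= 3 / (4 * PI) * (m r / r ^ 3) <= 1 + C * Rad ^ 2).
Proof.
  exists (1/100), 162. split; [lra|]. split; [apply R0_lt|]. split; [lra|].
  intros Rad HR0. assert (HR : 0 < Rad <= 1/100) by lra.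
  pose proof (rinf_good Rad HR) as HG.
  assert (Hfix : forall r, 0 <= r <= Rad -> rinf Rad r = T Rad (rinf Rad) r).
  { intros r Hr. rewrite <- (cl_id Rad r Hr). symmetry. apply rinf_fix; auto. }
  assert (HcG : forall z, continuity_pt (Gh Rad (rinf Rad)) z) by (intros; apply Gh_cont; auto).
  exists (Mf Rad (rinf Rad)), (T Rad (rinf Rad)).
  split; [|split; [|split; [|split; [|split; [|split]]]]].
  - intros r _. split; [apply Mf_cont; auto| apply T_cont; auto].
  - intros r Hr. assert (Hc : cl Rad r = r) by (apply cl_id; lra). split.
    + unfold tov_m_rhs. rewrite <- Hfix by lra. rewrite <- Hc at 3. apply Mf_deriv; auto.
    + replace (tov_rho_rhs r (Mf Rad (rinf Rad) r) (T Rad (rinf Rad) r)) with (- Gh Rad (rinf Rad) r).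
      * apply T_deriv; auto.
      * unfold Gh. rewrite Hc, <- Hfix by lra. ring.
  - intros x y Hx Hxy Hy. split.
    + unfold T. rewrite <- (Chasles' (Gh Rad (rinf Rad)) x y Rad HcG).
      assert (0 <= RInt (Gh Rad (rinf Rad)) x y); [|lra].
      apply RInt_nonneg; auto. intros; apply Gh_bnd; auto.
    + unfold Mf. rewrite <- (Chasles' _ 0 x y (Mf_int_cont Rad _ HG)).
      assert (0 <= RInt (fun t => 4*PI*t^2 * rinf Rad (cl Rad t)) x y); [|lra].
      apply RInt_nonneg; auto. apply Mf_int_cont; auto.
      intros t _. destruct HG as [_ Hb]. specialize (Hb t). pose proof PI_bnd.
      apply Rmult_le_pos; [apply Rmult_le_pos; [lra| apply pow2_ge_0]| lra].
  - intros r Hr. apply T_bnd; auto.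
  - unfold T. rewrite RInt_point. unfold zero; simpl. ring.
  - apply Mf_0.
  - intros r Hr. apply ratio; [apply PI_bnd| lra|].
    apply Mf_bnd; auto; [lra|]. intros t Ht. pose proof (cl_in Rad t ltac:(lra)).
    rewrite Hfix by auto. apply T_bnd; auto.
Qed.
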